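(* Let $\mathcal{M}^{(N)}$ be a symmetric weakly coupled MDP (WCMDP) with discount factor $\gamma\in[0,1)$. Let $\Pi^*_{\mathbf{1}/N,\mathrm{PI}}$ denote the set of stationary Markov policies that are permutation invariant and that maximize the utilitarian objective $\mathrm{GGF}_{\mathbf{1}/N}[\mathbf{V}_0^{\pi}]=\frac1N\sum_{n=1}^N V^{\pi}_{0,n}$ over all stationary Markov policies $\pi$. Then $\Pi^*_{\mathbf{1}/N,\mathrm{PI}}$ is non-empty, and every $\pi^*\in\Pi^*_{\mathbf{1}/N,\mathrm{PI}}$ satisfies \[ \mathrm{GGF}_{\mathbf{w}}\big[\mathbf{V}_0^{\pi^*}\big]=\max_{\pi}\mathrm{GGF}_{\mathbf{w}}\big[\mathbf{V}_0^{\pi}\big] \] for every weight vector $\mathbf{w}=(w_1,\dots,w_N)$ in the probability simplex with $w_1\ge w_2\ge\cdots\ge w_N$, where the maximum is over all stationary Markov policies.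
   Context: A WCMDP consists of $N$ sub-MDPs $n\in[N]$, each with finite state set $\mathcal{S}_n$, finite action set $\mathcal{A}_n$, transition kernel $p_n(s'|s,a)$ and reward $r_n(s,a)\in\mathbb{R}$. The joint state space is $\mathcal{S}^{(N)}=\prod_n\mathcal{S}_n$; the joint feasible action set is $\mathcal{A}^{(N)}=\{(a_1,\dots,a_N): a_n\in\mathcal{A}_n,\ \sum_{n=1}^N d_{k,n}(a_n)\le b_k\ \forall k\in[K]\}$ with $d_{k,n}\ge 0$, $b_k\ge0$, and an idle action consuming no resource so this set is non-empty. Joint transitions are $P^{(N)}(\mathbf{s}'|\mathbf{s},\mathbf{a})=\prod_{n}p_n(s'_n|s_n,a_n)$ and the vector reward is $\mathbf{r}(\mathbf{s},\mathbf{a})=(r_1(s_1,a_1),\dots,r_N(s_N,a_N))$. The initial joint state is drawn from a distribution $\boldsymbol{\mu}$ on $\mathcal{S}^{(N)}$. A stationary Markov policy $\pi$ gives probabilities $\pi(\mathbf{s},\mathbf{a})$ over $\mathbf{a}\in\mathcal{A}^{(N)}$ for each $\mathbf{s}$. The value vector is $\mathbf{V}_0^{\pi}=\mathbb{E}_{\pi}\big[\sum_{t\ge0}\gamma^t\mathbf{r}(\mathbf{s}_t,\mathbf{a}_t)\,\big|\,\mathbf{s}_0\sim\boldsymbol{\mu}\big]\in\mathbb{R}^N$, with components $V^{\pi}_{0,n}$. Permutations: for a permutation $\sigma$ of $[N]$, the permutation operator $Q$ acts on any $N$-tuple $\mathbf{v}$ by $(Q\mathbf{v})_n=v_{\sigma(n)}$;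 it acts in the same way on joint states and joint actions. $\mathcal{G}^N$ denotes the set of all $N!$ such operators. The WCMDP is symmetric if: (1) all sub-MDPs are identical ($\mathcal{S}_n=\mathcal{S}$, $\mathcal{A}_n=\mathcal{A}$, $p_n=p$, $r_n=r$ for all $n$); (2) resource consumption is symmetric ($d_{k,n}=d_k$ for all $n$); (3) $\boldsymbol{\mu}(\mathbf{s}_0)=\boldsymbol{\mu}(Q\mathbf{s}_0)$ for all $\mathbf{s}_0$ and all $Q\in\mathcal{G}^N$. A stationary Markov policy $\pi$ is permutation invariant if $\pi(\mathbf{s},\mathbf{a})=\pi(Q\mathbf{s},Q\mathbf{a})$ for all $Q\in\mathcal{G}^N$, $\mathbf{s}$, $\mathbf{a}$. Generalized Gini function: for $\mathbf{v}\in\mathbb{R}^N$ and weights $\mathbf{w}$ in the probability simplex with $w_1\ge\dots\ge w_N$, $\mathrm{GGF}_{\mathbf{w}}[\mathbf{v}]=\min_{\sigma}\sum_{n=1}^N w_n v_{\sigma(n)}$, the minimum over all permutations $\sigma$ of $[N]$. The utilitarian case is $\mathbf{w}=\mathbf{1}/N$, giving $\mathrm{GGF}_{\mathbf{1}/N}[\mathbf{v}]=\frac1N\sum_n v_n$. *)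

(* Defs.v *)
From HB Require Import structures.
From mathcomp Require Import all_boot all_order all_algebra all_fingroup.
From mathcomp Require Import all_classical all_reals all_analysis.
Set Implicit Arguments. Unset Strict Implicit. Unset Printing Implicit Defensive.
Import Order.TTheory GRing.Theory Num.Theory.
Local Open Scope ring_scope.

(* Symmetric WCMDP: N identical sub-MDPs with state type S, action type A,
   kernel p s a s', reward r s a; K resources, consumption d k a, budgets b k. *)

Definition jstate (N : nat) (S : finType) := {ffun 'I_N -> S}.
Definition jaction (N : nat) (A : finType) := {ffun 'I_N -> A}.

Definition feasible {R : realType} {N K : nat} {A : finType}
  (d : 'I_K -> A -> R) (b : 'I_K -> R) (a : jaction N A) : bool :=
  [forall k, \sum_(n < N) d k (a n) <= b k].

Definition is_policy {R : realType} {N K : nat} {S A : finType}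
  (d : 'I_K -> A -> R) (b : 'I_K -> R)
  (pi : jstate N S -> jaction N A -> R) : Prop :=
  (forall s a, 0 <= pi s a) /\
  (forall s a, ~~ feasible d b a -> pi s a = 0) /\
  (forall s, \sum_(a : jaction N A) pi s a = 1).

Definition jtrans {R : realType} {N : nat} {S A : finType}
  (p : S -> A -> S -> R) (s : jstate N S) (a : jaction N A) (s' : jstate N S) : R :=
  \prod_(n < N) p (s n) (a n) (s' n).

Fixpoint state_dist {R : realType} {N : nat} {S A : finType}
  (p : S -> A -> S -> R) (mu : jstate N S -> R)
  (pi : jstate N S -> jaction N A -> R) (t : nat) : jstate N S -> R :=
  match t with
  | 0 => mu
  | t'.+1 => fun s' => \sum_(s : jstate N S) \sum_(a : jaction N A)
               state_dist p mu pi t' s * pi s a * jtrans p s a s'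
  end.

Definition exp_reward {R : realType} {N : nat} {S A : finType}
  (p : S -> A -> S -> R) (r : S -> A -> R) (mu : jstate N S -> R)
  (pi : jstate N S -> jaction N A -> R) (t : nat) (n : 'I_N) : R :=
  \sum_(s : jstate N S) \sum_(a : jaction N A)
     state_dist p mu pi t s * pi s a * r (s n) (a n).

Definition value {R : realType} {N : nat} {S A : finType}
  (p : S -> A -> S -> R) (r : S -> A -> R) (mu : jstate N S -> R)
  (gamma : R) (pi : jstate N S -> jaction N A -> R) (n : 'I_N) : R :=
  limn (fun T : nat => \sum_(0 <= t < T) gamma ^+ t * exp_reward p r mu pi t n).

Definition permQ {N : nat} {T : Type} (sigma : 'S_N) (v : 'I_N -> T) : {ffun 'I_N -> T} :=
  [ffun n => v (sigma n)].

Definition perm_invariant {R : realType} {N : nat} {S A : finType}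
  (pi : jstate N S -> jaction N A -> R) : Prop :=
  forall (sigma : 'S_N) s a, pi s a = pi (permQ sigma s) (permQ sigma a).

Definition gini_weights {R : realType} {N : nat} (w : 'I_N -> R) : Prop :=
  (forall n, 0 <= w n) /\ \sum_(n < N) w n = 1 /\
  (forall i j : 'I_N, (i <= j)%N -> w j <= w i).

Definition GGF {R : realType} {N : nat} (w : 'I_N -> R) (v : 'I_N -> R) : R :=
  let f := fun sigma : 'S_N => \sum_(n < N) w n * v (sigma n) in
  \big[Num.min/f 1%g]_(sigma : 'S_N) f sigma.

Definition utilitarian {R : realType} (N : nat) : 'I_N -> R := fun _ => N%:R^-1.

(* Main.v *)
Require Import Defs.
From HB Require Import structures.
From mathcomp Require Import all_boot all_order all_algebra all_fingroup.
From mathcomp Require Import all_classical all_reals all_analysis.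
Import Order.TTheory GRing.Theory Num.Theory.
Import numFieldNormedType.Exports.
Local Open Scope classical_set_scope.
Local Open Scope ring_scope.
Set Implicit Arguments. Unset Strict Implicit. Unset Printing Implicit Defensive.

Section Gen.
Variable R : realType.

Lemma le0_fix (X : finType) (gamma : R) (Pm : X -> X -> R) (w : X -> R) :
  0 <= gamma < 1 ->
  (forall x y, 0 <= Pm x y) -> (forall x, \sum_y Pm x y = 1) ->
  (forall x, w x <= gamma * \sum_y Pm x y * w y) -> forall x, w x <= 0.
Proof.
move=> /andP[g0 g1] P0 P1 hw x.
case: (arg_maxP w (P:=predT) (i0:=x) isT) => x0 _ hmax.
apply: le_trans (hmax x isT) _.
have h1 : \sum_y Pm x0 y * w y <= w x0.
  rewrite -[X in _ <= X]mul1r -(P1 x0) mulr_suml.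
  apply: ler_sum => y _; apply: ler_wpM2l => //; exact: hmax.
have h2 := hw x0.
rewrite leNgt; apply/negP => hpos.
have : w x0 <= gamma * w x0 by apply: le_trans h2 _; exact: ler_wpM2l.
rewrite -subr_ge0 -{2}[w x0]mul1r -mulrBl.
rewrite pmulr_lge0 // subr_ge0 leNgt g1 //.
Qed.



End Gen.

Lemma le_sum_term (R : realType) (I : finType) (F : I -> R) i0 :
  (forall i, 0 <= F i) -> F i0 <= \sum_i F i.
Proof. by move=> h; rewrite (bigD1 i0) //= lerDl sumr_ge0. Qed.

Lemma bigmin_all (R : realType) (T : Type) (s : seq T) (F : T -> R) c0 c :
  (forall i, F i = c) -> c0 = c -> \big[Num.min/c0]_(i <- s) F i = c.
Proof.
move=> hF ->; elim: s => [|i s IH]; first by rewrite big_nil.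
by rewrite big_cons IH hF minxx.
Qed.

Lemma bigmin_le (R : realType) (T : eqType) (s : seq T) (F : T -> R) c0 j :
  j \in s -> \big[Num.min/c0]_(i <- s) F i <= F j.
Proof.
elim: s => [|i s IH] //; rewrite in_cons big_cons => /orP[/eqP->|hj].
  by rewrite ge_min lexx.
by rewrite ge_min (IH hj) orbT.
Qed.

Lemma GGF_util (R : realType) (N : nat) (v : 'I_N -> R) :
  GGF (@utilitarian R N) v = \sum_n N%:R^-1 * v n.
Proof.
have h : forall sg : 'S_N, \sum_n @utilitarian R N n * v (sg n) = \sum_n N%:R^-1 * v n.
  move=> sg; rewrite [RHS](reindex_inj (@perm_inj _ sg)) //.
rewrite /GGF /=; apply: bigmin_all => //; exact: h.
Qed.

Lemma GGF_const (R : realType) (N : nat) (w v : 'I_N -> R) c :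
  \sum_n w n = 1 -> (forall n, v n = c) -> GGF w v = c.
Proof.
move=> hw hv.
have h : forall sg : 'S_N, \sum_n w n * v (sg n) = c.
  by move=> sg; under eq_bigr do rewrite hv; rewrite -mulr_suml hw mul1r.
rewrite /GGF /=; apply: bigmin_all => //; exact: h.
Qed.

Lemma GGF_le_mean (R : realType) (N : nat) (w v : 'I_N -> R) :
  \sum_n w n = 1 -> (0 < N)%N -> GGF w v <= \sum_n N%:R^-1 * v n.
Proof.
move=> hw hN.
pose f := fun sg : 'S_N => \sum_n w n * v (sg n).
have hm : forall sg, GGF w v <= f sg.
  move=> sg; rewrite /GGF /=; apply: bigmin_le; exact: mem_index_enum.
pose n0 : 'I_N := Ordinal hN.
pose C := \sum_(sg : 'S_N) v (sg n0).
have hC : forall n, \sum_(sg : 'S_N) v (sg n) = C.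
  move=> n; rewrite /C (reindex_inj (mulgI (tperm n n0))) /=.
  by apply: eq_bigr => sg _; rewrite permM tpermL.
pose Kc := \sum_(sg : 'S_N) (1 : R).
have hK : 0 < Kc.
  apply: lt_le_trans (le_sum_term 1%g (fun _ => ler01)); exact: ltr01.
have h1 : GGF w v * Kc <= C.
  have -> : C = \sum_sg f sg.
    rewrite /f exchange_big /=.
    under eq_bigr do rewrite -big_distrr /= hC.
    by rewrite -mulr_suml hw mul1r.
  rewrite big_distrr /=; apply: ler_sum => sg _; rewrite mulr1; exact: hm.
have h2 : C * N%:R = Kc * \sum_n v n.
  transitivity (\sum_n \sum_(sg : 'S_N) v (sg n)).
    by under eq_bigr do rewrite hC; rewrite sumr_const card_ord mulr_natr.
  rewrite exchange_big /= mulr_suml; apply: eq_bigr => sg _.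
  by rewrite mul1r [RHS](reindex_inj (@perm_inj _ sg)).
have hN' : (0 : R) < N%:R by rewrite ltr0n.
have -> : \sum_n N%:R^-1 * v n = C / Kc.
  rewrite -big_distrr /=.
  apply: (mulfI (lt0r_neq0 hN')).
  rewrite mulrA divff ?lt0r_neq0 // mul1r.
  apply: (mulIf (lt0r_neq0 hK)).
  by rewrite -mulrA divfK ?lt0r_neq0 // [RHS]mulrC h2 mulrC.
by rewrite ler_pdivlMr.
Qed.

Lemma cvg_sum_fin (R : realType) (I : finType) (f : I -> nat -> R) (l : I -> R) :
  (forall i, f i n @[n --> \oo] --> l i) -> (\sum_i f i n) @[n --> \oo] --> \sum_i l i.
Proof.
move=> h; apply: (cvg_big (op := +%R) (x0 := 0) (P := predT)) => //.
exact: add_continuous.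
Qed.
Lemma cvg_lim_R (R : realType) (u : nat -> R) (l : R) : u n @[n --> \oo] --> l -> limn u = l.
Proof. exact: cvg_lim. Qed.
Lemma cvgMl' (R : realType) (u : nat -> R) (l : R) a : u n @[n --> \oo] --> l -> a * u n @[n --> \oo] --> a * l.
Proof. exact: cvgMl_tmp. Qed.
Lemma shift' (R : realType) (u : nat -> R) (l : R) : u n @[n --> \oo] --> l -> u n.+1 @[n --> \oo] --> l.
Proof. by move=> h; rewrite cvg_shiftS. Qed.

Lemma sum_eq_ind (R : realType) (T : finType) (F : T -> R) t0 :
  \sum_t (t == t0)%:R * F t = F t0.
Proof.
rewrite (bigD1 t0) //= eqxx mul1r big1 ?addr0 // => t /negbTE ->.
by rewrite mul0r.
Qed.

Lemma permQ_inj (N : nat) (T : finType) (sg : 'S_N) :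
  injective (fun x : {ffun 'I_N -> T} => permQ sg x).
Proof.
move=> x y e; apply/ffunP => n.
have := congr1 (fun f : {ffun 'I_N -> T} => f (sg^-1 n)%g) e.
by rewrite /= /permQ !ffunE permKV.
Qed.

Lemma permQK (N : nat) (T : Type) (sg : 'S_N) (x : {ffun 'I_N -> T}) :
  permQ (sg^-1)%g (permQ sg x) = x.
Proof. by apply/ffunP => n; rewrite /permQ !ffunE permKV. Qed.

Lemma permQKV (N : nat) (T : Type) (sg : 'S_N) (x : {ffun 'I_N -> T}) :
  permQ sg (permQ (sg^-1)%g x) = x.
Proof. by apply/ffunP => n; rewrite /permQ !ffunE permK. Qed.

Lemma sum_permQ (R : realType) (N : nat) (T : finType) (sg : 'S_N) (F : {ffun 'I_N -> T} -> R) :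
  \sum_(x : {ffun 'I_N -> T}) F x = \sum_(x : {ffun 'I_N -> T}) F (permQ sg x).
Proof. by rewrite [LHS](reindex_inj (@permQ_inj N T sg)). Qed.

Section MDP.
Variables (R : realType) (N : nat) (S A : finType) (p : S -> A -> S -> R) (gamma : R).
Hypothesis hp_nonneg : forall s a s', 0 <= p s a s'.
Hypothesis hp_sum : forall s a, \sum_(s' : S) p s a s' = 1.
Hypothesis hgamma : 0 <= gamma < 1.

Local Notation X := (jstate N S).
Local Notation J := (jaction N A).
Implicit Types (mu : X -> R) (pi : X -> J -> R) (c : X -> J -> R).

Definition delta (x : X) : X -> R := fun y => (y == x)%:R.
Definition Ptr pi (x y : X) : R := \sum_a pi x a * jtrans p x a y.
Definition rpi c pi (x : X) : R := \sum_a pi x a * c x a.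
Definition ER c mu pi t : R :=
  \sum_(s : X) \sum_(a : J) state_dist p mu pi t s * pi s a * c s a.
Definition PS c mu pi (T : nat) : R := \sum_(0 <= t < T) gamma ^+ t * ER c mu pi t.
Definition W c mu pi : R := limn (fun T : nat => PS c mu pi T).
Definition vf c pi (x : X) : R := W c (delta x) pi.

Lemma jtrans_ge0 (s : X) (a : J) (s' : X) : 0 <= jtrans p s a s'.
Proof. by apply: prodr_ge0 => n _. Qed.

Lemma jtrans_sum (s : X) (a : J) : \sum_(s' : X) jtrans p s a s' = 1.
Proof.
rewrite /jtrans -(bigA_distr_bigA (fun n (t : S) => p (s n) (a n) t)) /=.
by apply: big1 => n _; rewrite hp_sum.
Qed.

Lemma sum_delta (F : X -> R) x : \sum_y delta x y * F y = F x.
Proof.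
rewrite (bigD1 x) //= /delta eqxx mul1r big1 ?addr0 // => y /negbTE ->.
by rewrite mul0r.
Qed.

Lemma sum_delta' (F : X -> R) y : \sum_x delta x y * F x = F y.
Proof.
rewrite (bigD1 y) //= /delta eqxx mul1r big1 ?addr0 // => x.
by rewrite eq_sym => /negbTE ->; rewrite mul0r.
Qed.

Lemma sd0 mu pi y : state_dist p mu pi 0 y = mu y.
Proof. by []. Qed.

Lemma sdS mu pi t y : state_dist p mu pi t.+1 y =
  \sum_(s : X) \sum_(a : J) state_dist p mu pi t s * pi s a * jtrans p s a y.
Proof. by []. Qed.

Lemma jtransE (s : X) (a : J) (s' : X) : jtrans p s a s' = \prod_(n < N) p (s n) (a n) (s' n).
Proof. by []. Qed.

Lemma sd_lin mu pi t y :
  state_dist p mu pi t y = \sum_x mu x * state_dist p (delta x) pi t y.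
Proof.
elim: t y => [|t IH] y.
  rewrite sd0; under eq_bigr do rewrite sd0 mulrC. by rewrite sum_delta'.
rewrite sdS; under eq_bigr do under eq_bigr do rewrite IH.
under [RHS]eq_bigr do rewrite sdS big_distrr /=.
rewrite [RHS]exchange_big /=; apply: eq_bigr => s _.
under [RHS]eq_bigr do rewrite big_distrr /=.
rewrite [RHS]exchange_big /=; apply: eq_bigr => a _.
rewrite !mulr_suml; apply: eq_bigr => x _; by rewrite !mulrA.
Qed.

Lemma sd_shift mu pi t y :
  state_dist p mu pi t.+1 y = state_dist p (state_dist p mu pi 1) pi t y.
Proof.
elim: t y => [|t IH] y; first by [].
rewrite [LHS]sdS [RHS]sdS; apply: eq_bigr => s _; apply: eq_bigr => a _.
by rewrite IH.
Qed.

Lemma sd1_delta pi x y : state_dist p (delta x) pi 1 y = Ptr pi x y.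
Proof.
rewrite sdS /Ptr exchange_big /=; apply: eq_bigr => a _.
under eq_bigr do rewrite -mulrA.
by rewrite sum_delta.
Qed.

Lemma ER_lin c mu pi t : ER c mu pi t = \sum_x mu x * ER c (delta x) pi t.
Proof.
rewrite /ER; under eq_bigr do under eq_bigr do rewrite sd_lin !mulr_suml.
under [RHS]eq_bigr do rewrite big_distrr /=.
rewrite [RHS]exchange_big /=; apply: eq_bigr => s _.
under [RHS]eq_bigr do rewrite big_distrr /=.
rewrite [RHS]exchange_big /=; apply: eq_bigr => a _.
by apply: eq_bigr => x _; rewrite !mulrA.
Qed.

Lemma PS_lin c mu pi T : PS c mu pi T = \sum_x mu x * PS c (delta x) pi T.
Proof.
rewrite /PS; under eq_bigr do rewrite ER_lin big_distrr /=.
rewrite exchange_big /=; apply: eq_bigr => x _.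
rewrite big_distrr /=; apply: eq_bigr => t _.
by rewrite mulrCA.
Qed.

Lemma ER0_delta c pi x : ER c (delta x) pi 0 = rpi c pi x.
Proof.
rewrite /ER /= /rpi.
under eq_bigr do under eq_bigr do rewrite -mulrA.
under eq_bigr do rewrite -big_distrr /=.
by rewrite sum_delta.
Qed.

Lemma ERS c mu pi t : ER c mu pi t.+1 = ER c (state_dist p mu pi 1) pi t.
Proof.
rewrite /ER; apply: eq_bigr => s _; apply: eq_bigr => a _; by rewrite sd_shift.
Qed.

Lemma PS_step c pi x T :
  PS c (delta x) pi T.+1 = rpi c pi x + gamma * \sum_y Ptr pi x y * PS c (delta y) pi T.
Proof.
rewrite /PS big_nat_recl // expr0 mul1r ER0_delta; congr (_ + _).
under eq_bigr do rewrite ERS ER_lin.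
under [X in gamma * X]eq_bigr do rewrite big_distrr /=.
rewrite exchange_big big_distrr /=; apply: eq_bigr => t _.
rewrite exprS -!mulrA; congr (_ * _); rewrite big_distrr /=.
apply: eq_bigr => y _; rewrite mulrCA; congr (_ * (_ * _)); exact: sd1_delta.
Qed.

Definition isdist mu := (forall s, 0 <= mu s) /\ \sum_s mu s = 1.
Definition ispol pi := (forall s a, 0 <= pi s a) /\ (forall s, \sum_a pi s a = 1).

Lemma sd_dist mu pi : isdist mu -> ispol pi -> forall t, isdist (state_dist p mu pi t).
Proof.
move=> [m0 m1] [p0 p1]; elim=> [|t [IH0 IH1]]; first by split.
split=> [s|].
  rewrite sdS; apply: sumr_ge0 => x _; apply: sumr_ge0 => a _.
  by rewrite !mulr_ge0 // jtrans_ge0.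
under eq_bigr do rewrite sdS.
rewrite exchange_big /= -[RHS]IH1; apply: eq_bigr => s _.
rewrite exchange_big /=.
under eq_bigr do rewrite -big_distrr /= jtrans_sum mulr1.
by rewrite -big_distrr /= p1 mulr1.
Qed.

Definition Mb c : R := \sum_s \sum_a `|c s a|.

Lemma ER_bound c mu pi t : isdist mu -> ispol pi -> `|ER c mu pi t| <= Mb c.
Proof.
move=> hmu hpi; have [d0 d1] := sd_dist hmu hpi t.
have [p0 p1] := hpi.
apply: le_trans (ler_norm_sum _ _ _) _; apply: ler_sum => s _.
apply: le_trans (ler_norm_sum _ _ _) _; apply: ler_sum => a _.
rewrite !normrM (ger0_norm (d0 s)) (ger0_norm (p0 s a)).
rewrite -[X in _ <= X]mul1r; apply: ler_wpM2r => //.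
rewrite -[1]mul1r; apply: ler_pM => //.
  by rewrite -d1; apply: (le_sum_term _ d0).
by rewrite -(p1 s); apply: (le_sum_term _ (p0 s)).
Qed.

Lemma PS_cvg c mu pi : isdist mu -> ispol pi -> cvgn (fun T => PS c mu pi T).
Proof.
move=> hmu hpi.
have -> : (fun T => PS c mu pi T) = series (fun t => gamma ^+ t * ER c mu pi t) by [].
apply: normed_cvg.
have [g0 g1] := andP hgamma.
apply: (@series_le_cvg _ _ (geometric (Mb c) gamma)).
- by move=> n /=.
- move=> n; rewrite /geometric /= mulr_ge0 ?exprn_ge0 //.
  exact: le_trans (normr_ge0 _) (ER_bound c 0 hmu hpi).
- move=> n; rewrite /geometric /= normrM ger0_norm ?exprn_ge0 // mulrC.
  by apply: ler_wpM2r; [rewrite exprn_ge0|exact: ER_bound].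
- apply: is_cvg_geometric_series; by rewrite ger0_norm.
Qed.

Lemma delta_dist x : isdist (delta x).
Proof.
split=> [y|]; first by rewrite /delta ler0n.
by have := sum_delta (fun _ => 1) x; under eq_bigr do rewrite mulr1.
Qed.

Lemma PS_to c mu pi : isdist mu -> ispol pi -> PS c mu pi T @[T --> \oo] --> W c mu pi.
Proof. move=> hmu hpi; exact: (PS_cvg (c:=c) hmu hpi). Qed.

Lemma W_lin c mu pi : ispol pi -> W c mu pi = \sum_x mu x * vf c pi x.
Proof.
move=> hpi; apply: cvg_lim_R.
under eq_cvg do rewrite PS_lin.
apply: cvg_sum_fin => x; apply: cvgMl'.
exact: PS_to (delta_dist x) hpi.
Qed.

Lemma vf_fix c pi : ispol pi -> forall x,
  vf c pi x = rpi c pi x + gamma * \sum_y Ptr pi x y * vf c pi y.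
Proof.
move=> hpi x.
have h1 := shift' (PS_to (c:=c) (delta_dist x) hpi).
have h2 : PS c (delta x) pi T.+1 @[T --> \oo] -->
   rpi c pi x + gamma * \sum_y Ptr pi x y * vf c pi y.
  under eq_cvg do rewrite PS_step.
  apply: cvgD; first exact: cvg_cst.
  apply: cvgMl'; apply: cvg_sum_fin => y; apply: cvgMl'.
  exact: PS_to (delta_dist y) hpi.
exact: (cvg_unique _ h1 h2).
Qed.

Variables (r : S -> A -> R) (K : nat) (d : 'I_K -> A -> R) (b : 'I_K -> R).
Hypothesis hb : forall k, 0 <= b k.
Hypothesis hidle : exists a0 : A, forall k, d k a0 = 0.

Definition feas (a : J) : bool := feasible d b a.
Definition rho (x : X) (a : J) : R := N%:R^-1 * \sum_n r (x n) (a n).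
Definition Qf (u : X -> R) (x : X) (a : J) : R :=
  rho x a + gamma * \sum_y jtrans p x a y * u y.
Definition dpol (g : X -> J) : X -> J -> R := fun x a => (a == g x)%:R.

Lemma QE pi u x : \sum_a pi x a * Qf u x a = rpi rho pi x + gamma * \sum_y Ptr pi x y * u y.
Proof.
rewrite /Qf; under eq_bigr do rewrite mulrDr; rewrite big_split /=; congr (_ + _).
transitivity (gamma * \sum_a \sum_y pi x a * jtrans p x a y * u y).
  rewrite big_distrr /=; apply: eq_bigr => a _; rewrite mulrCA; congr (gamma * _).
  by rewrite big_distrr /=; apply: eq_bigr => y _; rewrite mulrA.
congr (gamma * _); rewrite exchange_big /=; apply: eq_bigr => y _.
by rewrite /Ptr big_distrl.
Qed.

Lemma Qdiff u1 u2 x a : Qf u1 x a - Qf u2 x a = gamma * \sum_y jtrans p x a y * (u1 y - u2 y).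
Proof.
rewrite /Qf opprD addrACA subrr add0r -mulrBr; congr (gamma * _).
by rewrite -sumrB; apply: eq_bigr => y _; rewrite mulrBr.
Qed.

Lemma Ptr_ge0 pi : ispol pi -> forall x y, 0 <= Ptr pi x y.
Proof.
move=> [p0 _] x y; apply: sumr_ge0 => a _; by rewrite mulr_ge0 // jtrans_ge0.
Qed.

Lemma Ptr_sum pi : ispol pi -> forall x, \sum_y Ptr pi x y = 1.
Proof.
move=> [_ p1] x; rewrite /Ptr exchange_big /= -(p1 x); apply: eq_bigr => a _.
by rewrite -big_distrr /= jtrans_sum mulr1.
Qed.

Lemma dpol_pol g : ispol (dpol g).
Proof.
split=> [x a|x]; first by rewrite /dpol ler0n.
by have := sum_eq_ind (fun _ => 1 : R) (g x); under eq_bigr do rewrite mulr1.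
Qed.

Lemma Ptr_dpol g x y : Ptr (dpol g) x y = jtrans p x (g x) y.
Proof. exact: sum_eq_ind. Qed.

Lemma vf_Q pi : ispol pi -> forall x, vf rho pi x = \sum_a pi x a * Qf (vf rho pi) x a.
Proof. by move=> hpi x; rewrite QE -vf_fix. Qed.

Lemma vf_dpol g x : vf rho (dpol g) x = Qf (vf rho (dpol g)) x (g x).
Proof. rewrite [LHS]vf_Q; [exact: sum_eq_ind | exact: dpol_pol]. Qed.

Lemma le_of_fix pi (u1 u2 : X -> R) : ispol pi ->
  (forall x, u1 x - u2 x <= gamma * \sum_y Ptr pi x y * (u1 y - u2 y)) ->
  forall x, u1 x <= u2 x.
Proof.
move=> hpi h x; rewrite -subr_le0.
exact: (le0_fix (w := fun y => u1 y - u2 y) hgamma (Ptr_ge0 hpi) (Ptr_sum hpi) h).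
Qed.

Definition B1 (u : X -> R) := forall x a, feas a -> Qf u x a <= u x.
Definition B2 (u : X -> R) := exists g : X -> J, forall x, feas (g x) /\ u x = Qf u x (g x).

Lemma bell_uniq u1 u2 : B2 u1 -> B1 u2 -> forall x, u1 x <= u2 x.
Proof.
move=> [g hg] h2; apply: (le_of_fix (dpol_pol g)) => x.
have [fg e] := hg x.
rewrite [X in X - _]e.
apply: le_trans (lerB (lexx _) (h2 x (g x) fg)) _.
rewrite Qdiff; apply: ler_wpM2l; first by case/andP: hgamma.
by under [X in _ <= X]eq_bigr do rewrite Ptr_dpol.
Qed.

Lemma bell_upper u pi : B1 u -> ispol pi -> (forall x a, ~~ feas a -> pi x a = 0) ->
  forall x, vf rho pi x <= u x.
Proof.
move=> h1 hpi h0; apply: (le_of_fix hpi) => x.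
have hle : \sum_a pi x a * Qf u x a <= u x.
  have [p0 p1] := hpi.
  rewrite -[X in _ <= X]mul1r -(p1 x) mulr_suml; apply: ler_sum => a _.
  case fa : (feas a); first by apply: ler_wpM2l => //; exact: h1.
  by rewrite h0 ?fa // !mul0r.
rewrite [X in X - _](vf_Q hpi).
apply: le_trans (lerB (lexx _) hle) _.
rewrite !QE opprD addrACA subrr add0r -mulrBr -sumrB.
by under eq_bigr do rewrite -mulrBr.
Qed.

Lemma improve_gen (u v : X -> R) (g' : X -> J) x a :
  (forall y, v y = Qf v y (g' y)) -> (forall y, y != x -> u y = Qf u y (g' y)) ->
  g' x = a -> u x < Qf u x a -> \sum_y u y < \sum_y v y.
Proof.
move=> hv hu gx hlt.
have [g0 g1] := andP hgamma.
have hle : forall y, u y <= v y.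
  apply: (le_of_fix (dpol_pol g')) => y.
  have h1 : u y <= Qf u y (g' y).
    case: (eqVneq y x) => [->|ne]; first by rewrite gx; exact: ltW.
    by rewrite -hu.
  rewrite [X in _ - X]hv; apply: le_trans (lerB h1 (lexx _)) _.
  rewrite Qdiff; apply: ler_wpM2l => //.
  by under [X in _ <= X]eq_bigr do rewrite Ptr_dpol.
have hx : u x < v x.
  rewrite hv gx; apply: lt_le_trans hlt _.
  rewrite /Qf lerD2l; apply: ler_wpM2l => //; apply: ler_sum => y _.
  by apply: ler_wpM2l; [exact: jtrans_ge0 | exact: hle].
rewrite (bigD1 x) //= [X in _ < X](bigD1 x) //=; apply: ltr_leD hx _.
by apply: ler_sum => y _; exact: hle.
Qed.

Lemma bellman_exists : exists u, B1 u /\ B2 u.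
Proof.
have [a0 ha0] := hidle.
pose Fs := [pred f : {ffun X -> J} | [forall x, feas (f x)]].
pose f0 : {ffun X -> J} := [ffun _ => [ffun _ => a0]].
have F0 : Fs f0.
  apply/forallP => x; apply/forallP => k; rewrite big1 ?hb // => n _.
  by rewrite !ffunE ha0.
pose val (f : {ffun X -> J}) := \sum_x vf rho (dpol f) x.
case: (arg_maxP val F0) => fs Ffs hmax.
exists (vf rho (dpol fs)); split; last first.
  by exists fs => x; split; [exact: (forallP Ffs x) | exact: vf_dpol].
move=> x a fa; rewrite leNgt; apply/negP => hlt.
pose f' : {ffun X -> J} := [ffun y => if y == x then a else fs y].
have Ff' : Fs f'.
  apply/forallP => y; rewrite ffunE; case: (y == x) => //; exact: (forallP Ffs y).
have hlt2 : \sum_y vf rho (dpol fs) y < \sum_y vf rho (dpol f') y.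
  apply: (improve_gen (g' := f') (x := x) (a := a) (vf_dpol f')) => //.
  - move=> y ne; rewrite ffunE (negbTE ne); exact: vf_dpol.
  - by rewrite ffunE eqxx.
by have := hmax f' Ff'; rewrite /= /val leNgt hlt2.
Qed.

Lemma rho_perm sg (x : X) (a : J) : rho (permQ sg x) (permQ sg a) = rho x a.
Proof.
rewrite /rho; congr (_ * _); rewrite [RHS](reindex_inj (@perm_inj _ sg)).
by apply: eq_bigr => n _; rewrite !ffunE.
Qed.

Lemma jtrans_perm sg (x : X) (a : J) (y : X) :
  jtrans p (permQ sg x) (permQ sg a) (permQ sg y) = jtrans p x a y.
Proof.
rewrite !jtransE [RHS](reindex_inj (@perm_inj _ sg)).
by apply: eq_bigr => n _; rewrite !ffunE.
Qed.

Lemma feas_perm sg (a : J) : feas (permQ sg a) = feas a.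
Proof.
rewrite /feas /feasible; apply: eq_forallb => k.
rewrite [X in _ = (X <= _)](reindex_inj (@perm_inj _ sg)).
by congr (_ <= _); apply: eq_bigr => n _; rewrite !ffunE.
Qed.

Lemma Qf_perm (u : X -> R) (sg : 'S_N) (x : X) (a : J) :
  Qf (fun y : X => u (permQ sg y)) x a = Qf u (permQ sg x) (permQ sg a).
Proof.
rewrite /Qf rho_perm; congr (_ + gamma * _).
rewrite [RHS](sum_permQ sg); apply: eq_bigr => y _; by rewrite jtrans_perm.
Qed.

Lemma B_perm (u : X -> R) (sg : 'S_N) : B1 u -> B2 u ->
  B1 (fun x : X => u (permQ sg x)) /\ B2 (fun x : X => u (permQ sg x)).
Proof.
move=> h1 [g hg]; split.
  by move=> x a fa; rewrite Qf_perm; apply: h1; rewrite feas_perm.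
exists (fun x : X => permQ (sg^-1)%g (g (permQ sg x))) => x; split.
  by rewrite feas_perm; exact: (hg _).1.
by rewrite Qf_perm permQKV; exact: (hg _).2.
Qed.

Lemma B_sym (u : X -> R) : B1 u -> B2 u -> forall (sg : 'S_N) (x : X), u (permQ sg x) = u x.
Proof.
move=> h1 h2 sg x; have [h1' h2'] := B_perm sg h1 h2.
apply/le_anti/andP; split.
  exact: (bell_uniq h2' h1).
exact: (bell_uniq h2 h1').
Qed.

Lemma QEdiff pi u1 u2 x :
  \sum_a pi x a * Qf u1 x a - \sum_a pi x a * Qf u2 x a =
  gamma * \sum_y Ptr pi x y * (u1 y - u2 y).
Proof.
rewrite !QE opprD addrACA subrr add0r -mulrBr -sumrB.
by under eq_bigr do rewrite -mulrBr.
Qed.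

Lemma vf_eq pi u : ispol pi -> (forall x, u x = \sum_a pi x a * Qf u x a) ->
  forall x, vf rho pi x = u x.
Proof.
move=> hpi hu x; apply/le_anti/andP; split.
  apply: (le_of_fix hpi) => y.
  by rewrite [X in X - _](vf_Q hpi) [X in _ - X]hu QEdiff.
apply: (le_of_fix hpi) => y.
by rewrite [X in X - _]hu [X in _ - X](vf_Q hpi) QEdiff.
Qed.

Definition good (u : X -> R) (x : X) (a : J) : bool := feas a && (Qf u x a == u x).
Definition cnt (u : X -> R) (x : X) : R := \sum_a (good u x a)%:R.
Definition pis (u : X -> R) (x : X) (a : J) : R := (good u x a)%:R / cnt u x.

Lemma cnt_pos u : B2 u -> forall x, 0 < cnt u x.
Proof.
move=> [g hg] x; have [fg e] := hg x.
have hgood : good u x (g x) by rewrite /good fg -e eqxx.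
apply: lt_le_trans (le_sum_term (g x) (fun a => ler0n _ _)).
by rewrite hgood ltr01.
Qed.

Lemma pis_policy u : B2 u -> is_policy d b (pis u).
Proof.
move=> h2; split; [|split].
- by move=> s a; rewrite /pis divr_ge0 ?ler0n // ltW // cnt_pos.
- by move=> s a fa; rewrite /pis /good /feas (negbTE fa) mul0r.
- move=> s; rewrite /pis -mulr_suml divff //; exact: lt0r_neq0 (cnt_pos h2 s).
Qed.

Lemma pis_fix u : B2 u -> forall x, u x = \sum_a pis u x a * Qf u x a.
Proof.
move=> h2 x.
transitivity (\sum_a pis u x a * u x).
  rewrite -mulr_suml; have [_ [_ ->]] := pis_policy h2; by rewrite mul1r.
apply: eq_bigr => a _; rewrite /pis; case hg: (good u x a).
  by move: hg => /andP[_ /eqP ->].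
by rewrite !mul0r.
Qed.

Lemma pis_inv u : (forall (sg : 'S_N) (x : X), u (permQ sg x) = u x) ->
  perm_invariant (pis u).
Proof.
move=> hs sg s a.
have hu : (fun y : X => u (permQ sg y)) = u by apply: funext => y; exact: hs.
have hgood : forall (x : X) (a : J), good u (permQ sg x) (permQ sg a) = good u x a.
  by move=> x a'; rewrite /good feas_perm -Qf_perm hu hs.
rewrite /pis hgood; congr (_ / _).
rewrite /cnt [RHS](sum_permQ sg); apply: eq_bigr => a' _; by rewrite hgood.
Qed.

Lemma pol_ispol pi : is_policy d b pi -> ispol pi.
Proof. by move=> [h0 [_ h1]]. Qed.

Lemma ER_rho mu pi t :
  ER rho mu pi t = \sum_n N%:R^-1 * ER (fun (x : X) (a : J) => r (x n) (a n)) mu pi t.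
Proof.
rewrite /ER /rho.
under eq_bigr do under eq_bigr do rewrite mulrCA big_distrr /= big_distrr /=.
under [RHS]eq_bigr do rewrite big_distrr /=.
under [RHS]eq_bigr do under eq_bigr do rewrite big_distrr /=.
rewrite [RHS]exchange_big /=; apply: eq_bigr => s _.
rewrite [RHS]exchange_big /=; apply: eq_bigr => a _.
apply: eq_bigr => n _; by rewrite !mulrA.
Qed.

Lemma PS_rho mu pi T :
  PS rho mu pi T = \sum_n N%:R^-1 * PS (fun (x : X) (a : J) => r (x n) (a n)) mu pi T.
Proof.
rewrite /PS; under eq_bigr do rewrite ER_rho big_distrr /=.
rewrite exchange_big /=; apply: eq_bigr => n _.
rewrite big_distrr /=; apply: eq_bigr => t _; by rewrite mulrCA.
Qed.

Lemma W_rho mu pi : isdist mu -> ispol pi ->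
  W rho mu pi = \sum_n N%:R^-1 * value p r mu gamma pi n.
Proof.
move=> hmu hpi; apply: cvg_lim_R.
under eq_cvg do rewrite PS_rho.
apply: cvg_sum_fin => n; apply: cvgMl'; exact: (PS_to hmu hpi).
Qed.

Lemma sd_inv mu pi (sg : 'S_N) : (forall s, mu s = mu (permQ sg s)) -> perm_invariant pi ->
  forall t (s : X), state_dist p mu pi t (permQ sg s) = state_dist p mu pi t s.
Proof.
move=> hmu hpi; elim=> [|t IH] s; first by rewrite !sd0 [RHS]hmu.
rewrite !sdS [LHS](sum_permQ sg); apply: eq_bigr => x _.
rewrite [LHS](sum_permQ sg); apply: eq_bigr => a _.
by rewrite IH -hpi jtrans_perm.
Qed.

Lemma erE mu pi t n : exp_reward p r mu pi t n =
  \sum_(s : X) \sum_(a : J) state_dist p mu pi t s * pi s a * r (s n) (a n).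
Proof. by []. Qed.

Lemma value_inv mu pi : (forall (sg : 'S_N) s, mu s = mu (permQ sg s)) -> perm_invariant pi ->
  forall n m, value p r mu gamma pi n = value p r mu gamma pi m.
Proof.
move=> hmu hpi n m.
have er : forall (sg : 'S_N) t n, exp_reward p r mu pi t (sg n) = exp_reward p r mu pi t n.
  move=> sg t k; rewrite !erE [RHS](sum_permQ sg); apply: eq_bigr => s _.
  rewrite [RHS](sum_permQ sg); apply: eq_bigr => a _.
  by rewrite (sd_inv (hmu sg) hpi) -hpi !ffunE.
rewrite -(tpermL n m) /value; congr (limn _); apply: funext => T.
by apply: eq_bigr => t _; rewrite er.
Qed.

Lemma main_part1 mu : isdist mu -> (forall (sg : 'S_N) s, mu s = mu (permQ sg s)) ->
  exists pi, [/\ is_policy d b pi, perm_invariant pi &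
        forall pi' : X -> J -> R, is_policy d b pi' ->
          GGF (@utilitarian R N) (value p r mu gamma pi') <=
          GGF (@utilitarian R N) (value p r mu gamma pi)].
Proof.
move=> hmu hsym; have [u [h1 h2]] := bellman_exists.
have hpol := pis_policy h2.
exists (pis u); split => //; first exact: pis_inv (B_sym h1 h2).
move=> pi' hpi'.
rewrite !GGF_util -!W_rho //; try exact: pol_ispol.
rewrite !W_lin //; try exact: pol_ispol.
apply: ler_sum => x _; apply: ler_wpM2l; first by case: hmu.
rewrite (vf_eq (pol_ispol hpol) (pis_fix h2)).
apply: (bell_upper h1 (pol_ispol hpi')).
by move=> y a; case: hpi' => _ [+ _]; apply.
Qed.

End MDP.
Lemma value_W (R : realType) (N : nat) (S A : finType) (p : S -> A -> S -> R) (gamma : R) (r : S -> A -> R) (mu : jstate N S -> R) (pi : jstate N S -> jaction N A -> R) (n : 'I_N) :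
  value p r mu gamma pi n = W p gamma (fun (x : jstate N S) (a : jaction N A) => r (x n) (a n)) mu pi.
Proof. reflexivity. Qed.

Theorem theorem3p2 (R : realType) (N K : nat) (S A : finType)
  (p : S -> A -> S -> R) (r : S -> A -> R)
  (d : 'I_K -> A -> R) (b : 'I_K -> R)
  (mu : jstate N S -> R) (gamma : R)
  (hp_nonneg : forall s a s', 0 <= p s a s')
  (hp_sum : forall s a, \sum_(s' : S) p s a s' = 1)
  (hd : forall k a, 0 <= d k a) (hb : forall k, 0 <= b k)
  (hidle : exists a0 : A, forall k, d k a0 = 0)
  (hmu_nonneg : forall s, 0 <= mu s)
  (hmu_sum : \sum_(s : jstate N S) mu s = 1)
  (hmu_sym : forall (sigma : 'S_N) (s : jstate N S), mu s = mu (permQ sigma s))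
  (hgamma : 0 <= gamma < 1) :
  let V := value p r mu gamma in
  let opt_PI := fun pi : jstate N S -> jaction N A -> R =>
    [/\ is_policy d b pi, perm_invariant pi &
        forall pi' : jstate N S -> jaction N A -> R, is_policy d b pi' ->
          GGF (@utilitarian R N) (V pi') <= GGF (@utilitarian R N) (V pi)] in
  (exists pi, opt_PI pi) /\
  (forall pistar, opt_PI pistar ->
     forall w : 'I_N -> R, gini_weights w ->
       forall pi : jstate N S -> jaction N A -> R, is_policy d b pi -> GGF w (V pi) <= GGF w (V pistar)).
Proof.
move=> V opt_PI; split.
  exact: (main_part1 hp_nonneg hp_sum hgamma r hb hidle (conj hmu_nonneg hmu_sum) hmu_sym).
move=> pistar [hps hinv hopt] w [w0 [w1 wmono]] pi hpi.
have hN : (0 < N)%N.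
  rewrite lt0n; apply/negP => /eqP hN0.
  move: w1; rewrite big1 => [/eqP|n _]; first by rewrite eq_sym oner_eq0.
  by have := ltn_ord n; rewrite {2}hN0.
pose c := V pistar (Ordinal hN).
have hc : forall n, V pistar n = c.
  move=> n; exact: (value_inv p gamma r hmu_sym hinv).
rewrite (GGF_const w1 hc).
apply: le_trans (GGF_le_mean _ w1 hN) _.
rewrite -GGF_util; apply: le_trans (hopt pi hpi) _.
rewrite (GGF_const _ hc) //.
rewrite /utilitarian.
transitivity (\sum_(n < N) (N%:R^-1 * 1 : R)); first by apply: eq_bigr => n _; rewrite mulr1.
rewrite -big_distrr /= sumr_const card_ord -mulr_natr mul1r mulVf //.
by rewrite pnatr_eq0 -lt0n.
Qed.
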